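(* Let $A$ be a finite set, let $P$ be a probability measure on $(A^{\mathbb{Z}},\mathfrak{A}^{\mathbb{Z}})$ (not necessarily stationary), and let $h\ge 0$. Then $P$ satisfies condition (B) with respect to $h$ if and only if $P$ satisfies condition (B* ) with respect to $h$.
   Context: $\mathfrak{A}^{\mathbb{Z}}$ is the $\sigma$-field on $A^{\mathbb{Z}}$ generated by cylinder sets. For $n\ge 1$, $A^{(n)}:=\prod_{i=1}^n A$ and $P^{(n)}$ denotes the marginal of $P$ on the coordinates $1,\dots,n$, i.e. $P^{(n)}(\mathbf{x})=P(\{\xi: (\xi_i)_{i=1}^n=\mathbf{x}\})$ for $\mathbf{x}\in A^{(n)}$. For a finite sequence $\mathbf{x}=(x_i)_{i=1}^n$ ($n\ge2$) let $\mathbf{x}_\flat:=(x_i)_{i=1}^{n-1}$, and for a set $C\subseteq A^{(n+1)}$ let $C_\flat:=\{\mathbf{x}_\flat:\mathbf{x}\in C\}$. Condition (B) w.r.t. $h$: for $P$-almost every $(\xi_n)_{n\in\mathbb{Z}}\in A^{\mathbb{Z}}$ the limit $\lim_{n\to\infty}-\frac1n\log P^{(n)}((\xi_i)_{i=1}^n)$ exists and equals $h$. Condition (B* ) w.r.t. $h$: for every $\varepsilon>0$ there exist subsets $C_\varepsilon^{(n)}\subseteq A^{(n)}$, $n\in\mathbb{N}$, and a number $N(\varepsilon)$ such that (1) $C_\varepsilon^{(n)}=(C_\varepsilon^{(n+1)})_\flat$ for all $n\ge1$; (2) $\#C_\varepsilon^{(n)}\in(e^{n(h-\varepsilon)},e^{n(h+\varepsilon)})$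 for $n\ge N(\varepsilon)$; (3) $P^{(n)}(\mathbf{x})<e^{-n(h-\varepsilon)}$ for all $n\ge N(\varepsilon)$ and all $\mathbf{x}\in C_\varepsilon^{(n)}$; (4) $P^{(n)}(C_\varepsilon^{(n)})>1-\varepsilon$ for all $n\ge 1$. *)

(* Defs.v *)
From HB Require Import structures.
From mathcomp Require Import all_boot all_order all_algebra.
From mathcomp Require Import all_classical all_reals all_analysis.
Set Implicit Arguments. Unset Strict Implicit. Unset Printing Implicit Defensive.
Import Order.TTheory GRing.Theory Num.Theory.
Import numFieldNormedType.Exports.
Local Open Scope classical_set_scope.
Local Open Scope ring_scope.


(* the sequence space A^Z ; the witness a0 is only used to equip it with
   the (pointed) structure required by MathComp-Analysis measurable types *)
Definition seqZ (A : finType) (a0 : A) := int -> A.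
Arguments seqZ {A} a0.
HB.instance Definition _ (A : finType) (a0 : A) := Choice.on (seqZ a0).
HB.instance Definition _ (A : finType) (a0 : A) :=
  isPointed.Build (seqZ a0) (fun=> a0).

Definition cylinders (A : finType) (a0 : A) : set (set (seqZ a0)) :=
  [set C | exists (s : seq int) (x : int -> A),
           C = [set xi : seqZ a0 | forall i, i \in s -> xi i = x i]].
Arguments cylinders {A} a0.

Definition AZ (A : finType) (a0 : A) := g_sigma_algebraType (cylinders a0).
Arguments AZ {A} a0.


Definition block (A : finType) (a0 : A) (n : nat) (xi : AZ a0) : {ffun 'I_n -> A} :=
  [ffun i : 'I_n => xi (i.+1)%:Z].

Definition marg (R : realType) (A : finType) (a0 : A)
  (P : probability (AZ a0) R) (n : nat) (C : {set {ffun 'I_n -> A}}) : R :=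
  fine (P [set xi : AZ a0 | block n xi \in C]).

Definition marg1 (R : realType) (A : finType) (a0 : A)
  (P : probability (AZ a0) R) (n : nat) (x : {ffun 'I_n -> A}) : R :=
  marg P [set x].

Definition flat (A : finType) (n : nat) (x : {ffun 'I_n.+1 -> A}) : {ffun 'I_n -> A} :=
  [ffun i : 'I_n => x (widen_ord (leqnSn n) i)].

Definition flatset (A : finType) (n : nat) (C : {set {ffun 'I_n.+1 -> A}}) :
  {set {ffun 'I_n -> A}} := [set flat x | x in C].

Definition condB (R : realType) (A : finType) (a0 : A)
  (P : probability (AZ a0) R) (h : R) : Prop :=
  {ae P, forall xi : AZ a0,
     (fun n : nat => - ln (marg1 P (block n xi)) / n%:R) @ \oo --> h}.

Definition condBstar (R : realType) (A : finType) (a0 : A)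
  (P : probability (AZ a0) R) (h : R) : Prop :=
  forall eps : R, 0 < eps ->
  exists (C : forall n : nat, {set {ffun 'I_n -> A}}) (N : nat),
    [/\ (forall n : nat, (1 <= n)%N -> C n = flatset (C n.+1)),
        (forall n : nat, (1 <= n)%N -> (N <= n)%N ->
           expR (n%:R * (h - eps)) < (#|C n|)%:R < expR (n%:R * (h + eps))),
        (forall n : nat, (1 <= n)%N -> (N <= n)%N ->
           forall x, x \in C n -> marg1 P x < expR (- (n%:R * (h - eps))))
      & (forall n : nat, (1 <= n)%N -> marg P (C n) > 1 - eps)].

(* Main.v *)
Require Import Defs.
From HB Require Import structures.
From mathcomp Require Import all_boot all_order all_algebra.
From mathcomp Require Import all_classical all_reals all_analysis.
From mathcomp Require Import ring lra.
Import Order.TTheory GRing.Theory Num.Theory.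
Import numFieldNormedType.Exports.
Set Implicit Arguments. Unset Strict Implicit. Unset Printing Implicit Defensive.
Local Open Scope classical_set_scope.
Local Open Scope ring_scope.

Section Infra.
Variables (A : finType) (a0 : A).

Definition yext (n : nat) (x : {ffun 'I_n -> A}) : int -> A :=
  fun j => match j with
           | Posz k.+1 => oapp (fun i : 'I_n => x i) a0 (insub k)
           | _ => a0 end.

Lemma cyl_meas (n : nat) (x : {ffun 'I_n -> A}) :
  measurable [set xi : AZ a0 | block n xi = x].
Proof.
apply: sub_sigma_algebra.
exists [seq (val i).+1%:Z | i <- enum 'I_n], (yext x).
apply/seteqP; split => xi /=.
- move=> <- j /mapP [i _ ->] /=.
  by rewrite valK /= /block ffunE.
- move=> H; apply/ffunP => i; rewrite /block ffunE.
  have := H (val i).+1%:Z; rewrite /= valK; apply.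
  by apply/mapP; exists i => //; rewrite mem_enum.
Qed.

Lemma pre_meas (n : nat) (Q : {ffun 'I_n -> A} -> Prop) :
  measurable [set xi : AZ a0 | Q (block n xi)].
Proof.
have -> : [set xi : AZ a0 | Q (block n xi)] =
  \bigcup_(x in Q) [set xi : AZ a0 | block n xi = x].
  apply/seteqP; split => xi /=; first by move=> Hq; exists (block n xi).
  by move=> [x Qx ->].
apply: fin_bigcup_measurable => // x _; exact: cyl_meas.
Qed.
End Infra.

Section Marg.
Variables (R : realType) (A : finType) (a0 : A) (P : probability (AZ a0) R).

Lemma margE n (C : {set {ffun 'I_n -> A}}) :
  (marg P C)%:E = P [set xi : AZ a0 | block n xi \in C].
Proof.
have mS := @pre_meas A a0 n (fun x => x \in C).
rewrite /marg fineK // ge0_fin_numE //.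
by apply: (le_lt_trans (probability_le1 P mS)); rewrite ltry.
Qed.

Lemma marg1E n (x : {ffun 'I_n -> A}) :
  (marg1 P x)%:E = P [set xi : AZ a0 | block n xi = x].
Proof.
rewrite /marg1 margE; congr (P _); apply/seteqP; split => xi /=.
  by rewrite !inE => /eqP.
by move=> ->; rewrite !inE.
Qed.

Lemma marg_seq n (s : seq {ffun 'I_n -> A}) : uniq s ->
  P [set xi : AZ a0 | block n xi \in s] =
  (\sum_(x <- s) P [set xi : AZ a0 | block n xi = x])%E.
Proof.
elim: s => [|x s IH] /=.
  move=> _; rewrite big_nil.
  have -> : [set xi : AZ a0 | block n xi \in [::]] = set0.
    by apply/seteqP; split => xi //=.
  by rewrite measure0.
move=> /andP[xs us]; rewrite big_cons -IH //.
have -> : [set xi : AZ a0 | block n xi \in x :: s] =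
  [set xi : AZ a0 | block n xi = x] `|` [set xi : AZ a0 | block n xi \in s].
  apply/seteqP; split => xi /=; rewrite in_cons.
    by case/orP => [/eqP ->|]; [left|right].
  by case => [->|->]; rewrite ?eqxx ?orbT.
rewrite (measureU P (cyl_meas (a0:=a0) x) (pre_meas (a0:=a0) (fun y => y \in s))) //.
apply/seteqP; split => xi //= [-> H]; by rewrite H in xs.
Qed.

Lemma marg_sum n (C : {set {ffun 'I_n -> A}}) :
  marg P C = \sum_(x in C) marg1 P x.
Proof.
apply: EFin_inj; rewrite margE -sumEFin.
under eq_bigr do rewrite marg1E.
rewrite -big_enum -marg_seq ?enum_uniq //; congr (P _).
by apply/seteqP; split => xi /=; rewrite mem_enum.
Qed.

Lemma marg1_ge0 n (x : {ffun 'I_n -> A}) : 0 <= marg1 P x.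
Proof. by rewrite -lee_fin marg1E. Qed.

Lemma marg_le1 n (C : {set {ffun 'I_n -> A}}) : marg P C <= 1.
Proof. by rewrite -lee_fin margE probability_le1 //; exact: (pre_meas (a0:=a0) (fun y => y \in C)). Qed.

Lemma marg_ge n (C : {set {ffun 'I_n -> A}}) (S : set (AZ a0)) :
  measurable S -> (forall xi, S xi -> block n xi \in C) ->
  (P S <= (marg P C)%:E)%E.
Proof.
move=> mS SC; rewrite margE; apply: le_measure; rewrite ?inE //; first exact: (pre_meas (a0:=a0) (fun y => y \in C)).

Qed.

End Marg.

Section Pos.
Variables (R : realType) (A : finType) (a0 : A) (P : probability (AZ a0) R).

Lemma ae_pos : {ae P, forall xi : AZ a0, forall n, 0 < marg1 P (block n xi)}.
Proof.
apply: ae_foralln => n.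
exists [set xi : AZ a0 | block n xi \in [set x | marg1 P x == 0]%SET]; split.
- exact: (pre_meas (a0:=a0) (fun y => y \in [set x | marg1 P x == 0]%SET)).
- have E := @margE R A a0 P n [set x | marg1 P x == 0]%SET.
  apply: (etrans (esym E)); rewrite marg_sum big1 // => x; by rewrite inE => /eqP.
- move=> xi /= H; rewrite inE eq_le marg1_ge0 andbT.
  by rewrite leNgt; apply/negP.
Qed.
End Pos.

Section RealAux.
Variable R : realType.

Lemma fle (n : nat) (p c : R) : (0 < n)%N -> 0 < p ->
  (- ln p / n%:R <= c) = (expR (- (n%:R * c)) <= p).
Proof.
move=> n0 p0; rewrite ler_pdivrMr ?ltr0n // [c * _]mulrC lerNl.
by rewrite -{2}(@lnK R p) ?posrE // ler_expR.
Qed.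

Lemma flt (n : nat) (p c : R) : (0 < n)%N -> 0 < p ->
  (- ln p / n%:R < c) = (expR (- (n%:R * c)) < p).
Proof.
move=> n0 p0; rewrite ltr_pdivrMr ?ltr0n // [c * _]mulrC ltrNl.
by rewrite -{2}(@lnK R p) ?posrE // ltr_expR.
Qed.

Lemma fge (n : nat) (p c : R) : (0 < n)%N -> 0 < p ->
  (c <= - ln p / n%:R) = (p <= expR (- (n%:R * c))).
Proof. by move=> n0 p0; rewrite leNgt flt // -leNgt. Qed.

Lemma fgt (n : nat) (p c : R) : (0 < n)%N -> 0 < p ->
  (c < - ln p / n%:R) = (p < expR (- (n%:R * c))).
Proof. by move=> n0 p0; rewrite ltNge fle // -ltNge. Qed.

End RealAux.

Section BtoBs.
Variables (R : realType) (A : finType) (a0 : A) (P : probability (AZ a0) R) (h : R).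

Lemma flat_block n (xi : AZ a0) : flat (block n.+1 xi) = block n xi.
Proof. by apply/ffunP => i; rewrite /flat /block !ffunE. Qed.

Lemma BtoBs : condB P h -> condBstar P h.
Proof.
move=> HB eps eps0.
have Hall : {ae P, forall xi : AZ a0,
   ((fun n : nat => - ln (marg1 P (block n xi)) / n%:R) @ \oo --> h) /\
   (forall n, 0 < marg1 P (block n xi))}.
  by apply: filterS2 HB (ae_pos P) => xi H1 H2.
case: Hall => N0 [mN0 PN0 HN0].
set e2 := eps / 2.
have e20 : 0 < e2 by rewrite divr_gt0.
set dl := Num.min eps (1/2).
have dl0 : 0 < dl by rewrite lt_min eps0 divr_gt0.
pose Q n (x : {ffun 'I_n -> A}) :=
  expR (- (n%:R * (h + e2))) <= marg1 P x <= expR (- (n%:R * (h - e2))).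
pose G M := [set xi : AZ a0 | forall n, (M < n)%N -> Q n (block n xi)].
have mG M : measurable (G M).
  have -> : G M = \bigcap_(n in [set n | (M < n)%N]) [set xi : AZ a0 | Q n (block n xi)].
    by apply/seteqP; split => xi /= H n /H.
  apply: bigcap_measurable; first by exists M.+1 => /=.
  move=> k _; exact: (pre_meas (a0:=a0) (Q k)).
have ndG : nondecreasing_seq G.
  move=> m1 m2 le12; apply/asboolP => xi /= H n ltn; apply: H.
  exact: leq_ltn_trans ltn.
have mUG : measurable (\bigcup_M G M) by exact: bigcup_measurable.
have UG1 : P (\bigcup_M G M) = 1%E.
  apply/eqP; rewrite eq_le probability_le1 //=.
  have <- : P (~` N0) = 1%E by rewrite probability_setC // PN0 sube0.
  apply: le_measure; rewrite ?inE //; first exact: measurableC.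
  move=> xi /= xiN0.
  have [Hc Hp] : ((fun n : nat => - ln (marg1 P (block n xi)) / n%:R) @ \oo --> h) /\
     (forall n, 0 < marg1 P (block n xi)).
    by apply: contrapT => /HN0.
  move/cvgrPdist_le: Hc => /(_ e2 e20) [M _ HM].
  exists M => // n ltn; rewrite /Q.
  have n0 : (0 < n)%N by apply: leq_ltn_trans ltn.
  have := HM n (ltnW ltn); rewrite /= ler_distlC => /andP[H1 H2].
  by rewrite -fle // -fge // H1 H2.
have cvgG : (P \o G) n @[n --> \oo] --> 1%E.
  by rewrite -UG1; exact: nondecreasing_cvg_mu.
have : \forall n \near \oo, ((1 - dl / 2)%:E <= (P \o G) n)%E.
  apply: lte_lim.
  - move=> m1 m2 le12; apply: le_measure; rewrite ?inE //; exact/asboolP/ndG.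
  - by apply/cvg_ex; exists 1%E.
  - rewrite (cvg_lim _ cvgG) // lte_fin gtrBl divr_gt0 //.
case=> M _ /(_ M (leqnn M)) /= PGM.
have PGM' : ((1 - dl)%:E < P (G M))%E.
  apply: lt_le_trans PGM; rewrite lte_fin ltrD2l ltrN2.
  by rewrite ltr_pdivrMr // ltr_pMr // ltr1n.
have epsE : eps = e2 + e2 by rewrite /e2 -splitr.
pose C n := [set x : {ffun 'I_n -> A} | `[< exists xi, G M xi /\ block n xi = x >]]%SET.
have inC n xi : G M xi -> block n xi \in C n.
  by move=> Gxi; rewrite inE; apply/asboolP; exists xi.
have CQ n x : x \in C n -> (M < n)%N -> Q n x.
  by rewrite inE => /asboolP [xi [Gxi <-]] /Gxi.
have margC n : 1 - dl < marg P (C n).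
  rewrite -lte_fin; apply: lt_le_trans PGM' _.
  by apply: marg_ge => // xi /inC.
pose K := (Num.trunc (e2^-1)).+1.
have K1 : e2^-1 < K%:R by exact: truncnS_gt.
exists C, (maxn M.+1 K); split.
- move=> n _; apply/setP => x; rewrite /flatset; apply/idP/idP.
  + rewrite inE => /asboolP [xi [Gxi <-]]; apply/imsetP.
    by exists (block n.+1 xi); [exact: inC | rewrite flat_block].
  + move/imsetP => [y]; rewrite inE => /asboolP [xi [Gxi <-]] ->.
    by rewrite flat_block; exact: inC.
- move=> n n0; rewrite geq_max => /andP[Mn Kn].
  have ne2 : 1 < n%:R * e2.
    have K1p : e2^-1 * e2 < K%:R * e2 by rewrite ltr_pM2r. rewrite mulVf ?gt_eqF // in K1p. apply: (lt_le_trans K1p).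
    by rewrite ler_pM2r // ler_nat.
  have sum1 : marg P (C n) <= #|C n|%:R * expR (- (n%:R * (h - e2))).
    rewrite marg_sum mulrC mulr_natr -sumr_const; apply: ler_sum => x xC.
    by case/andP: (CQ n x xC Mn).
  have sum2 : #|C n|%:R * expR (- (n%:R * (h + e2))) <= marg P (C n).
    rewrite marg_sum mulrC mulr_natr -sumr_const; apply: ler_sum => x xC.
    by case/andP: (CQ n x xC Mn).
  apply/andP; split.
  + rewrite -(ltr_pM2r (expR_gt0 (- (n%:R * (h - e2))))).
    apply: (lt_le_trans _ sum1); apply: (lt_trans _ (margC n)).
    rewrite -expRD (_ : _ + _ = - (n%:R * e2)); last by rewrite epsE; ring.
    have H12 : 1 / 2 <= 1 - dl.
      have dl12 : dl <= 1 / 2 by rewrite /dl ge_min lexx orbT.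
      lra.
    apply: (lt_le_trans _ H12); rewrite expRN.
    rewrite mul1r ltf_pV2 ?posrE ?expR_gt0 //.
    apply: (lt_trans (expR_gt1Dx (oner_neq0 R))); by rewrite ltr_expR.
  + rewrite -(ltr_pM2r (expR_gt0 (- (n%:R * (h + e2))))).
    apply: le_lt_trans sum2 _; apply: le_lt_trans (marg_le1 P (C n)) _.
    rewrite -expRD (_ : _ + _ = n%:R * e2); last by rewrite epsE; ring.
    have ne0 : 0 < n%:R * e2 by apply: lt_trans ne2.
    apply: (@lt_trans _ _ (1 + n%:R * e2)); [by rewrite ltrDl | by apply: expR_gt1Dx; rewrite gt_eqF].
- move=> n n0; rewrite geq_max => /andP[Mn Kn] x xC.
  case/andP: (CQ n x xC Mn) => _ H; apply: (le_lt_trans H).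
  rewrite ltr_expR ltrN2 ltr_pM2l ?ltr0n // ltrD2l ltrN2 epsE ltrDr //.
- move=> n _; apply: le_lt_trans (margC n); rewrite lerD2l lerN2 ge_min lexx //.
Qed.
End BtoBs.

Lemma geo_sum (R : realType) (q : R) (M K : nat) : 0 <= q < 1 ->
  \sum_(M <= i < K) q ^+ i <= q ^+ M / (1 - q).
Proof.
move=> /andP[q0 q1].
have q1' : 0 < 1 - q by rewrite subr_gt0.
rewrite ler_pdivlMr //.
rewrite -{1}(add0n M) big_addn.
have Hgen L : (\sum_(0 <= i < L) q ^+ (i + M)) * (1 - q) = q ^+ M - q ^+ (L + M).
  elim: L => [|L IH]; first by rewrite big_geq // mul0r add0n subrr.
  rewrite big_nat_recr //= mulrDl IH addSn exprS.
  rewrite [q ^+ (L + M) * _]mulrBr mulr1; ring.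
rewrite Hgen lerBlDr lerDl; exact: exprn_ge0.
Qed.

Section Negl.
Variables (R : realType) (A : finType) (a0 : A) (P : probability (AZ a0) R).

Lemma negl_small (Q : AZ a0 -> Prop) :
  (forall k : nat, exists S : set (AZ a0),
     [/\ measurable S, (P S <= (k.+1%:R^-1)%:E)%E & ~` [set xi | Q xi] `<=` S]) ->
  {ae P, forall xi, Q xi}.
Proof.
move=> /(_ _)/cid - /all_sig[S /all_and3[mS PS QS]].
exists (\bigcap_k S k); split.
- exact: bigcapT_measurable.
- have mI : measurable (\bigcap_k S k) by exact: bigcapT_measurable.
  have le k : (P (\bigcap_k S k) <= (k.+1%:R^-1)%:E)%E.
    apply: le_trans (PS k); apply: le_measure; rewrite ?inE //.
    exact: bigcap_inf.
  have fin : P (\bigcap_k S k) \is a fin_num.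
    rewrite ge0_fin_numE //; apply: le_lt_trans (le 0%N) _; exact: ltry.
  rewrite -(fineK fin); congr (_%:E).
  set r := fine _.
  have r0 : 0 <= r by rewrite /r fine_ge0.
  apply/eqP; rewrite eq_le r0 andbT; apply/negP => /negP; rewrite -ltNge => rpos.
  pose K := Num.trunc (r^-1).
  have := le K; rewrite -(fineK fin) lee_fin -/r => rle.
  have : r^-1 < K.+1%:R by exact: truncnS_gt.
  move=> H.
  have H2 : K.+1%:R^-1 < r.
    by rewrite -[X in _ < X]invrK ltf_pV2 ?posrE ?invr_gt0 ?ltr0n.
  by move: H2; rewrite ltNge rle.
- by move=> xi nQ k _; apply: QS.
Qed.
End Negl.

Lemma aux1 (R : realType) (a b : R) : 1 - a <= b -> 1 - b <= a.
Proof. lra. Qed.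
Lemma aux2 (R : realType) (a b : R) : a <= b / 2 -> a + b / 2 <= b.
Proof. lra. Qed.
Lemma aux3 (R : realType) (h e a : R) : 0 < e -> a <= e / 2 -> h - e <= h - a.
Proof. lra. Qed.
Lemma aux4 (R : realType) (h e a : R) : a <= e / 2 -> h + a + a <= h + e.
Proof. lra. Qed.

Section BstoB.
Variables (R : realType) (A : finType) (a0 : A) (P : probability (AZ a0) R) (h : R).

Definition fseq (xi : AZ a0) (n : nat) : R := - ln (marg1 P (block n xi)) / n%:R.

Lemma good_ae (HBs : condBstar P h) (e : R) : 0 < e ->
  {ae P, forall xi : AZ a0, (forall n, 0 < marg1 P (block n xi)) ->
     exists M, forall n, (M <= n)%N -> h - e <= fseq xi n <= h + e}.
Proof.
move=> e0; apply: negl_small => k.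
set dl := k.+1%:R^-1.
have dl0 : 0 < dl by rewrite invr_gt0 ltr0n.
set ep := Num.min (e / 2) (dl / 2).
have ep0 : 0 < ep by rewrite lt_min !divr_gt0.
have [C [N [H1 H2 H3 H4]]] := HBs ep ep0.
pose D n := [set xi : AZ a0 | block n xi \in C n].
have mD n : measurable (D n) by exact: (pre_meas (a0:=a0) (fun y => y \in C n)).
have DS n : D n.+2 `<=` D n.+1.
  move=> xi; rewrite /D /= (H1 n.+1 erefl) => Hx.
  by rewrite /flatset; apply/imsetP; exists (block n.+2 xi) => //; rewrite flat_block.
pose F n := D n.+1.
have Fk n m : F (n + m)%N `<=` F n.
  elim: m => [|m IH]; first by rewrite addn0.
  by rewrite addnS; apply: subset_trans (DS _) IH.
have niF : {homo F : n m / (n <= m)%N >-> (m <= n)%O}.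
  move=> n m nm; apply/asboolP; rewrite -(subnKC nm); exact: Fk.
pose G := \bigcap_n F n.
have mG : measurable G by apply: bigcapT_measurable => n; exact: mD.
have PG : ((1 - ep)%:E <= P G)%E.
  have cvF : (P \o F) n @[n --> \oo] --> P G.
    apply: nonincreasing_cvg_mu => //; last by move=> i; exact: mD.
    by apply: (le_lt_trans (probability_le1 P (mD 1%N))); rewrite ltry.
  rewrite -(cvg_lim _ cvF) //; apply: lime_ge; first by apply/cvg_ex; exists (P G).
  apply: nearW => n /=; rewrite -margE lee_fin; exact/ltW/H4.
have PnG : (P (~` G) <= ep%:E)%E.
  have finG : P G \is a fin_num.
    by rewrite ge0_fin_numE //; apply: (le_lt_trans (probability_le1 P mG)); rewrite ltry.
  rewrite probability_setC // -(fineK finG) -EFinB lee_fin.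
  by apply: aux1; move: PG; rewrite -(fineK finG) lee_fin.
pose c n := expR (- (n%:R * (h + ep + ep))).
pose B n := [set x : {ffun 'I_n -> A} | (x \in C n) && (marg1 P x < c n)]%SET.
pose Bad n := [set xi : AZ a0 | block n xi \in B n].
have mBad n : measurable (Bad n) by exact: (pre_meas (a0:=a0) (fun y => y \in B n)).
set q := expR (- ep).
have PBad n : (0 < n)%N -> (N <= n)%N -> (P (Bad n) <= (q ^+ n)%:E)%E.
  move=> n0 Nn.
  have E := @margE R A a0 P n (B n).
  rewrite -E lee_fin marg_sum.
  apply: (@le_trans _ _ (#|B n|%:R * c n)).
    rewrite mulrC mulr_natr -sumr_const; apply: ler_sum => x.
    by rewrite inE => /andP[_ /ltW].
  apply: (@le_trans _ _ (#|C n|%:R * c n)).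
    rewrite ler_pM2r ?expR_gt0 // ler_nat; apply: subset_leq_card.
    by apply/fintype.subsetP => x; rewrite inE => /andP[].
  case/andP: (H2 n n0 Nn) => _ Hc.
  apply: (@le_trans _ _ (expR (n%:R * (h + ep)) * c n)).
    by rewrite ler_pM2r ?expR_gt0 // ltW.
  rewrite /q -expRM_natl /c -expRD.
  by rewrite (_ : _ + _ = n%:R * - ep) //; ring.
have q0 : 0 <= q by rewrite ltW // expR_gt0.
have q1 : q < 1 by rewrite /q -expR0 ltr_expR oppr_lt0.
have q01 : 0 <= q < 1 by rewrite q0 q1.
have q1' : 0 < 1 - q by rewrite subr_gt0.
set t := (1 - q) * (dl / 2).
have t0 : 0 < t by rewrite mulr_gt0 // divr_gt0.
pose K0 := (Num.trunc (- ln t / ep)).+1.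
pose M0 := maxn (maxn N 1) K0.
have M01 : (0 < M0)%N by rewrite /M0 !leq_max ltnS leqnn orbT.
have qM0 : q ^+ M0 / (1 - q) <= dl / 2.
  rewrite ler_pdivrMr // mulrC -/t.
  have H : - ln t / ep < M0%:R.
    apply: (lt_le_trans (truncnS_gt _)); rewrite ler_nat /M0 leq_max leqnn orbT //.
  have H' : - ln t / M0%:R <= ep.
    rewrite ler_pdivrMr ?ltr0n // mulrC; apply: ltW.
    by rewrite -ltr_pdivrMr.
  rewrite fle // in H'.
  by rewrite /q -expRM_natl mulrN.
have mU : measurable (\bigcup_(n in ~` `I_M0) Bad n).
  by apply: bigcup_measurable => n _; exact: mBad.
have PU : (P (\bigcup_(n in ~` `I_M0) Bad n) <= (dl / 2)%:E)%E.
  apply: le_trans (measure_sigma_subadditive_tail P mBad mU (@subset_refl _ _)) _.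
  apply: lime_le; first by apply: is_cvg_nneseries.
  apply: nearW => K.
  apply: (@le_trans _ _ (\sum_(M0 <= i < K) (q ^+ i)%:E)%E).
    rewrite big_nat_cond [X in (_ <= X)%E]big_nat_cond.
    apply: lee_sum => i /andP[/andP[Mi _] _]; apply: PBad.
      exact: leq_trans M01 Mi.
    by apply: leq_trans Mi; rewrite /M0 !leq_max leqnn.
  by rewrite sumEFin lee_fin; apply: le_trans (geo_sum M0 K q01) qM0.
exists (~` G `|` \bigcup_(n in ~` `I_M0) Bad n); split.
- by apply: measurableU => //; exact: measurableC.
- apply: le_trans (measureU2 P (measurableC mG) mU) _.
  apply: le_trans (leeD PnG PU) _; rewrite -EFinD lee_fin.
  by apply: aux2; rewrite /ep ge_min lexx orbT.
- move=> xi /= nQ; apply: contrapT => nS; apply: nQ => Pos.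
  have Gxi : G xi by apply: contrapT => nG; apply: nS; left.
  have nB m : (M0 <= m)%N -> ~ Bad m xi.
    move=> Mm Bm; apply: nS; right; exists m => //=.
    by apply/negP; rewrite -leqNgt.
  exists M0 => n Mn.
  have n0 : (0 < n)%N by apply: leq_trans Mn.
  have Nn : (N <= n)%N by apply: leq_trans Mn; rewrite /M0 !leq_max leqnn.
  have bC : block n xi \in C n.
    by have := Gxi n.-1 I; rewrite /F /D /= prednK.
  apply/andP; split.
  + have := H3 n n0 Nn _ bC; rewrite -fgt // => /ltW; apply: le_trans.
    by apply: aux3 => //; rewrite /ep ge_min lexx.
  + have : ~~ (marg1 P (block n xi) < c n).
      apply/negP => lt; apply: (nB n Mn); rewrite /Bad /= inE bC lt //.
    rewrite -leNgt /c -fle // => Hf; apply: le_trans Hf _.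
    by apply: aux4; rewrite /ep ge_min lexx.
Qed.
End BstoB.

Lemma BstoB (R : realType) (A : finType) (a0 : A) (P : probability (AZ a0) R) (h : R) :
  condBstar P h -> condB P h.
Proof.
move=> HBs.
have H1 : {ae P, forall xi : AZ a0, forall k : nat,
   (forall n, 0 < marg1 P (block n xi)) ->
     exists M, forall n, (M <= n)%N -> h - k.+1%:R^-1 <= fseq P xi n <= h + k.+1%:R^-1}.
  apply: ae_foralln => k; apply: good_ae => //; by rewrite invr_gt0 ltr0n.
apply: filterS2 H1 (ae_pos P) => xi Hg Hp.
apply/cvgrPdist_le => e e0.
pose k := Num.trunc (e^-1).
have [M HM] := Hg k Hp.
have ke : k.+1%:R^-1 <= e.
  apply: ltW; rewrite -[X in _ < X]invrK ltf_pV2 ?posrE ?invr_gt0 ?ltr0n //.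
  exact: truncnS_gt.
exists M => // n /= Mn.
rewrite ler_distlC; have /andP[l u] := HM n Mn.
move: l u; rewrite /fseq; set f := (- ln _ / _); move=> l u.
set r := k.+1%:R^-1 in l u ke *; clearbody f r.
apply/andP; split; lra.
Qed.

Unset Implicit Arguments.
Theorem lemma2p1 (R : realType) (A : finType) (a0 : A)
  (P : probability (AZ a0) R) (h : R) (hge0 : 0 <= h) :
  condB P h <-> condBstar P h.
Proof. split; [exact: BtoBs | exact: BstoB]. Qed.
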